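(* Let $n\ge 1$ and let $t_1,\dots,t_n$ be formal variables, with $\bar t_i:=t_i^{-1}$. Let $b=\prod_{\alpha=1}^k\sigma_{i_\alpha}^{s_\alpha}$ be a braid in the braid group $B_n$, written as a word in the standard generators $\sigma_1,\dots,\sigma_{n-1}$ with signs $s_\alpha\in\{+1,-1\}$ (product taken from left to right, i.e. from the bottom of the braid to the top). Let $\tau=[\tau 1,\dots,\tau n]$ be the permutation induced by $b$ (as defined in the context), let $\gamma=\Gamma(b)$ be the Gassner invariant of $b$, and let $\iota=[1,2,\dots,n]$ be the identity permutation. Then $$\Omega(\tau)\,\gamma^{-1}=\bar{\gamma}^T\,\Omega(\iota),\qquad\text{equivalently}\qquad \gamma^{-1}=\Omega(\tau)^{-1}\,\bar\gamma^T\,\Omega(\iota),$$ where $\bar\gamma$ is obtained from $\gamma$ by the substitution $t_i\mapsto t_i^{-1}$ for all $i$, and $\bar\gamma^T$ is its transpose.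
   Context: The braid group $B_n$ has generators $\sigma_1,\dots,\sigma_{n-1}$ and relations $\sigma_i\sigma_j=\sigma_j\sigma_i$ for $|i-j|>1$ and $\sigma_i\sigma_{i+1}\sigma_i=\sigma_{i+1}\sigma_i\sigma_{i+1}$. Strands are indexed $1,\dots,n$ at the bottom of the braid. Reading the word $b=\prod_{\alpha=1}^k\sigma_{i_\alpha}^{s_\alpha}$ from left to right (bottom to top), track which strand occupies each position: initially position $p$ holds strand $p$; the letter $\sigma_{i}^{\pm1}$ is a crossing of the strands at positions $i$ and $i+1$ (as counted just below that crossing), after which these two strands swap positions. For crossing number $\alpha$, let $j_\alpha$ be the index of the over strand: it is the strand at position $i_\alpha$ just below the crossing if $s_\alpha=+1$, and the strand at position $i_\alpha+1$ just below the crossing if $s_\alpha=-1$. The induced permutation $\tau=[\tau1,\dots,\tau n]$ is defined by: after all $k$ crossings (at the top of the braid), position $p$ holds strand $\tau p$. For a variable $t$ and $1\le i\le n-1$, $U_i(t)$ is the $n\times n$ identity matrix with its $2\times2$ block in rows and columns $i,i+1$ replaced by $\begin{pmatrix}1-t&1\\ t&0\end{pmatrix}$; its inverse $U_i^{-1}(t)$ is the identity matrix with that block replaced by $\begin{pmatrix}0&t^{-1}\\ 1&1-t^{-1}\end{pmatrix}$. The Gassner invariant of $b$ is the matrix $\Gamma(b):=\prod_{\alpha=1}^k U_{i_\alpha}^{s_\alpha}(t_{j_\alpha})$ (product from left to right), with entries Laurent polynomials in $t_1,\dots,t_n$ over $\mathbb Z$. For a permutation $\tau=[\tau1,\dots,\tau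 n]$ of $1,\dots,n$, $\Omega(\tau)$ is the lower-triangular $n\times n$ matrix whose diagonal entries are $\Omega(\tau)_{pp}=(1-t_{\tau p})^{-1}$, whose entries below the diagonal are all $1$, and whose entries above the diagonal are all $0$. *)

(* Defs.v *)
From mathcomp Require Import all_boot all_order all_algebra.
Set Implicit Arguments. Unset Strict Implicit. Unset Printing Implicit Defensive.
Import GRing.Theory.
Local Open Scope ring_scope.

(* A braid word: a list of letters (i, s) standing for sigma_i^{s},
   with i 1-based and s = true meaning +1, s = false meaning -1.
   The word is read left to right (bottom to top). *)
Definition braid_word := seq (nat * bool).

Definition valid_word (n : nat) (w : braid_word) : bool :=
  all (fun l => (0 < l.1 < n)%N) w.

(* Position state: p (1-based position) |-> strand (1-based) at position p. *)
Definition swap_pos (st : nat -> nat) (i : nat) : nat -> nat :=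
  fun p => if p == i then st i.+1 else if p == i.+1 then st i else st p.

(* Induced permutation tau: after all crossings, position p holds strand tau p. *)
Fixpoint induced_perm_aux (st : nat -> nat) (w : braid_word) : nat -> nat :=
  match w with
  | [::] => st
  | (i, _) :: w' => induced_perm_aux (swap_pos st i) w'
  end.
Definition induced_perm (w : braid_word) : nat -> nat := induced_perm_aux id w.

Section Gassner.
Variables (F : fieldType) (n : nat).

(* U_i(x): identity with block [[1-x, 1],[x, 0]] in rows/cols i, i+1 (1-based);
   matrix indices r : 'I_n are 0-based, so row i corresponds to val r = i-1. *)
Definition Umx (i : nat) (x : F) : 'M[F]_n :=
  \matrix_(r, c)
    if (r.+1 == i) && (c.+1 == i) then 1 - x
    else if (r.+1 == i) && (c.+1 == i.+1) then 1
    else if (r.+1 == i.+1) && (c.+1 == i) then x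
    else if (r.+1 == i.+1) && (c.+1 == i.+1) then 0
    else (r == c)%:R.

Definition Uinvmx (i : nat) (x : F) : 'M[F]_n :=
  \matrix_(r, c)
    if (r.+1 == i) && (c.+1 == i) then 0
    else if (r.+1 == i) && (c.+1 == i.+1) then x^-1
    else if (r.+1 == i.+1) && (c.+1 == i) then 1
    else if (r.+1 == i.+1) && (c.+1 == i.+1) then 1 - x^-1
    else (r == c)%:R.

(* The over
   strand of sigma_i^{+1} is the strand at position i, of sigma_i^{-1} the
   strand at position i+1 (just below the crossing). *)
Fixpoint gassner_aux (t : nat -> F) (st : nat -> nat) (w : braid_word) : 'M[F]_n :=
  match w with
  | [::] => 1%:M
  | (i, s) :: w' =>
      (if s then Umx i (t (st i)) else Uinvmx i (t (st i.+1)))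
        *m gassner_aux t (swap_pos st i) w'
  end.
Definition gassner (t : nat -> F) (w : braid_word) : 'M[F]_n := gassner_aux t id w.

Definition Omega (t : nat -> F) (tau : nat -> nat) : 'M[F]_n :=
  \matrix_(r, c)
    if r == c then (1 - t (tau r.+1))^-1
    else if (c < r)%N then 1 else 0.

End Gassner.

(* Main.v *)
Require Import Defs.
From mathcomp Require Import all_boot all_order all_algebra zify ring.
Import GRing.Theory.
Local Open Scope ring_scope.
Set Implicit Arguments. Unset Strict Implicit.

Lemma ord_eqE n (a b : 'I_n) : (a == b) = (nat_of_ord a == nat_of_ord b).
Proof. by []. Qed.
Lemma ord_neq n (a b : 'I_n) : a != b -> (nat_of_ord a != nat_of_ord b).
Proof. by []. Qed.

Section Blk.
Variables (F : fieldType) (n : nat).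

Definition Blk (i : nat) (a b c d : F) : 'M[F]_n :=
  \matrix_(r, k)
    if (r.+1 == i) && (k.+1 == i) then a
    else if (r.+1 == i) && (k.+1 == i.+1) then b
    else if (r.+1 == i.+1) && (k.+1 == i) then c
    else if (r.+1 == i.+1) && (k.+1 == i.+1) then d
    else (r == k)%:R.

Lemma Umx_Blk i x : Umx n i x = Blk i (1 - x) 1 x 0. Proof. by []. Qed.
Lemma Uinvmx_Blk i x : Uinvmx n i x = Blk i 0 x^-1 1 (1 - x^-1). Proof. by []. Qed.

Ltac decb := repeat (match goal with
  | |- context [(?x == ?y :> nat)] =>
     (have -> : (x == y) = true by (apply/idP; lia)) ||
     (have -> : (x == y) = false by (apply/negbTE/negP; lia)) ||
     (let hb := fresh "hb" in case: (boolP (x == y)) => hb; try (exfalso; lia))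
  | |- context [(?x < ?y)%N] =>
     (have -> : (x < y)%N = true by (apply/idP; lia)) ||
     (have -> : (x < y)%N = false by (apply/negbTE/negP; lia)) ||
     (let hb := fresh "hb" in case: (boolP (x < y)%N) => hb; try (exfalso; lia))
  end; rewrite /= ?mulr0n ?mulr1n ?mulr0 ?mulr1).


Lemma Blk_tr i a b c d : (Blk i a b c d)^T = Blk i a c b d.
Proof.
apply/matrixP => r k; rewrite !mxE !ord_eqE.
have [h|h] := eqVneq (r:nat) k.
  have e : r = k by apply: val_inj.
  subst r; decb; by [].
decb; by [].
Qed.


Section Mul.
Variables (i : nat) (P Q : 'I_n) (hP : P.+1 = i) (hQ : Q.+1 = i.+1).

Lemma mulmx_Blk a b c d (M : 'M[F]_n) r k :
  (M *m Blk i a b c d) r k =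
  if k.+1 == i then M r P * a + M r Q * c
  else if k.+1 == i.+1 then M r P * b + M r Q * d else M r k.
Proof.
rewrite mxE.
have PQ : P != Q by rewrite ord_eqE; apply/negP; lia.
case: ifP => hk1; last case: ifP => hk2.
- rewrite (bigD1 P) //= (bigD1 Q) /=; last by rewrite eq_sym.
  rewrite big1 ?addr0; last first.
    move=> j /andP[jQ jP]; move/ord_neq in jQ; move/ord_neq in jP; rewrite !mxE ord_eqE.
    decb; rewrite ?mulr0 //.
  rewrite !mxE !ord_eqE; decb; by [].
- rewrite (bigD1 P) //= (bigD1 Q) /=; last by rewrite eq_sym.
  rewrite big1 ?addr0; last first.
    move=> j /andP[jQ jP]; move/ord_neq in jQ; move/ord_neq in jP; rewrite !mxE ord_eqE.
    decb; rewrite ?mulr0 //.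
  rewrite !mxE !ord_eqE; decb; by [].
- rewrite (bigD1 k) //= big1 ?addr0; last first.
    move=> j jk; move/ord_neq in jk; rewrite !mxE ord_eqE.
    decb; rewrite ?mulr0 //.
  rewrite !mxE !ord_eqE; decb; by rewrite ?mulr1.
Qed.

Lemma Blk_mulmx a b c d (M : 'M[F]_n) r k :
  (Blk i a b c d *m M) r k =
  if r.+1 == i then a * M P k + b * M Q k
  else if r.+1 == i.+1 then c * M P k + d * M Q k else M r k.
Proof.
rewrite -[Blk _ _ _ _ _ *m M]trmxK trmx_mul Blk_tr mxE mulmx_Blk !mxE.
by case: ifP => _; [|case: ifP => _]; rewrite // ?mxE; congr (_ + _); apply: mulrC. 
Qed.
End Mul.

Lemma omega_pos (t : nat -> F) st i (hi : (0 < i < n)%N)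
  (hx : t (st i) != 0) (hx1 : t (st i) != 1) (hy1 : 1 - t (st i.+1) != 0) :
  (Umx n i (t (st i))^-1)^T *m Omega n t st *m Umx n i (t (st i))
  = Omega n t (swap_pos st i).
Proof.
case: i hi hx hx1 hy1 => [//|p] /andP[_ hp] hx hx1 hy1.
have hp' : (p < n)%N by lia.
pose P := Ordinal hp'; pose Q := Ordinal hp.
have hP : P.+1 = p.+1 by []. have hQ : Q.+1 = p.+2 by [].
have h1x : 1 - t (st p.+1) != 0 by rewrite subr_eq0 eq_sym.
apply/matrixP => r c.
rewrite !Umx_Blk Blk_tr (mulmx_Blk hP hQ) !(Blk_mulmx hP hQ) !mxE !ord_eqE /swap_pos /=.
decb.
all: try (move: hb; rewrite ?eqSS => /eqP hb; subst).
all: try rewrite hQ.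
all: try done.
all: field.
all: by rewrite ?hx ?h1x ?hy1.
Qed.

Lemma omega_neg (t : nat -> F) st i (hi : (0 < i < n)%N)
  (hy : t (st i.+1) != 0) (hy1 : t (st i.+1) != 1) (hx1 : 1 - t (st i) != 0) :
  (Uinvmx n i (t (st i.+1))^-1)^T *m Omega n t st *m Uinvmx n i (t (st i.+1))
  = Omega n t (swap_pos st i).
Proof.
case: i hi hy hy1 hx1 => [//|p] /andP[_ hp] hy hy1 hx1.
have hp' : (p < n)%N by lia.
pose P := Ordinal hp'; pose Q := Ordinal hp.
have hP : P.+1 = p.+1 by []. have hQ : Q.+1 = p.+2 by [].
have h1y : 1 - t (st p.+2) != 0 by rewrite subr_eq0 eq_sym.
apply/matrixP => r c.
rewrite !Uinvmx_Blk Blk_tr (mulmx_Blk hP hQ) !(Blk_mulmx hP hQ) !mxE !ord_eqE /swap_pos /=.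
decb.
all: try (move: hb; rewrite ?eqSS => /eqP hb; subst).
all: try rewrite hQ.
all: try done.
all: field.
all: by rewrite ?hy ?h1y ?hx1 ?oner_eq0.
Qed.

Lemma Umx_inv i (x : F) (hi : (0 < i < n)%N) (hx : x != 0) :
  Umx n i x *m Uinvmx n i x = 1%:M.
Proof.
case: i hi => [//|p] /andP[_ hp].
have hp' : (p < n)%N by lia.
pose P := Ordinal hp'; pose Q := Ordinal hp.
have hP : P.+1 = p.+1 by []. have hQ : Q.+1 = p.+2 by [].
apply/matrixP => r c.
rewrite Umx_Blk Uinvmx_Blk (mulmx_Blk hP hQ) !mxE !ord_eqE /=.
decb.
all: try (move: hb; rewrite ?eqSS => /eqP hb; subst).
all: try rewrite hQ.
all: try done.
all: field.
all: by rewrite ?hx ?oner_eq0.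
Qed.

Definition inrange (st : nat -> nat) :=
  forall p, (0 < p <= n)%N -> (0 < st p <= n)%N.

Lemma swap_ok st i : inrange st -> (0 < i < n)%N -> inrange (swap_pos st i).
Proof.
move=> h /andP[h1 h2] p hp; rewrite /swap_pos.
case: eqP => [_|_]; first by apply: h; lia.
case: eqP => [_|_]; first by apply: h; lia.
exact: h.
Qed.

Lemma stepA (t : nat -> F)
  (ht : forall j : nat, (0 < j <= n)%N -> t j != 0 /\ t j != 1)
  (w : braid_word) : forall st, inrange st -> valid_word n w ->
  Omega n t (induced_perm_aux st w) =
  (gassner_aux n (fun j => (t j)^-1) st w)^T *m Omega n t st *m gassner_aux n t st w.
Proof.
elim: w => [|[i s] w IH] st hst /=.
  by rewrite trmx1 mul1mx mulmx1.
move=> /andP[/= hi hw].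
rewrite IH //; last exact: swap_ok.
have [hx0 hx1] : t (st i) != 0 /\ t (st i) != 1 by apply: ht; apply: hst; lia.
have [hy0 hy1] : t (st i.+1) != 0 /\ t (st i.+1) != 1 by apply: ht; apply: hst; lia.
have h1x : 1 - t (st i) != 0 by rewrite subr_eq0 eq_sym.
have h1y : 1 - t (st i.+1) != 0 by rewrite subr_eq0 eq_sym.
rewrite trmx_mul -!mulmxA; congr (_ *m _); rewrite !mulmxA; congr (_ *m _).
by case: s; [rewrite omega_pos | rewrite omega_neg].
Qed.

Lemma gassner_unit (t : nat -> F)
  (ht : forall j : nat, (0 < j <= n)%N -> t j != 0 /\ t j != 1)
  (w : braid_word) : forall st, inrange st -> valid_word n w ->
  gassner_aux n t st w \in unitmx.
Proof.
elim: w => [|[i s] w IH] st hst /=.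
  by rewrite unitmx1.
move=> /andP[/= hi hw].
rewrite unitmx_mul IH ?andbT //; last exact: swap_ok.
have [hx0 hx1] : t (st i) != 0 /\ t (st i) != 1 by apply: ht; apply: hst; lia.
have [hy0 hy1] : t (st i.+1) != 0 /\ t (st i.+1) != 1 by apply: ht; apply: hst; lia.
case: s.
  by have [] := mulmx1_unit (Umx_inv hi hx0).
by have [] := mulmx1_unit (Umx_inv hi hy0).
Qed.

End Blk.
Unset Implicit Arguments. Set Strict Implicit.

Theorem mainTheorem1 (F : fieldType) (n : nat) (hn : (0 < n)%N)
  (t : nat -> F)
  (ht : forall j : nat, (0 < j <= n)%N -> t j != 0 /\ t j != 1)
  (w : braid_word) (hw : valid_word n w) :
  Omega n t (induced_perm w) *m invmx (gassner n t w)
  = (gassner n (fun j => (t j)^-1) w)^T *m Omega n t id.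
Proof.
have hid : inrange n id by [].
rewrite /induced_perm /gassner (stepA ht hid hw) -mulmxA mulmxV ?mulmx1 //.
exact: gassner_unit.
Qed.
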